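(* Let $q,r,\mu,\nu$ be positive integers. For all $z\in\mathbb{C}$: \begin{align*} \mathcal{A}(z)&=(\widetilde U_\mu(z)\otimes I_q)\,\mathcal{A}(0)\,(\widetilde W_\nu(z)\otimes I_r),\\ \mathcal{M}(z)&=(I_\mu\otimes\widetilde U_q(z))\,\mathcal{M}(0)\,(I_\nu\otimes\widetilde W_r(z)),\\ \mathcal{M}(z)&=(\widetilde U_\mu(-z)\otimes U_q(z))\,\mathcal{A}(z)\,(\widetilde W_\nu(-z)\otimes W_r(z)),\\ \mathcal{N}(z)&=(U_\mu(z)^{-1}\otimes U_q(z))\,\mathcal{A}(z)\,(W_\nu(z)^{-1}\otimes W_r(z)),\\ \mathcal{N}(z)&=(I_\mu\otimes\widetilde U_q(z))\,\mathcal{N}(0)\,(I_\nu\otimes\widetilde W_r(z)). \end{align*}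
   Context: Matrix indices start at $0$. $u(z)=(1,\dots,z^{q-1})^\top$, $w(z)=(1,\dots,z^{r-1})$, $M(z)=u(z)w(z)$; $\mathcal{M}(z)$ (resp. $\mathcal{N}(z)$) is the $\mu q\times\nu r$ block matrix with $(i,j)$ block $M^{(i+j)}(z)$ (resp. $\frac{1}{i!j!}M^{(i+j)}(z)$), $i<\mu$, $j<\nu$. For $k\ge0$, $A^k(z)\in\mathbb{C}^{q\times r}$ has entries $\frac{k!}{a!b!(k-a-b)!}z^{k-a-b}$ (zero if $a+b>k$), and $\mathcal{A}(z)$ is the $\mu q\times\nu r$ block matrix with $(i,j)$ block $A^{i+j}(z)$. For any $n\ge1$: $U_n(z)\in\mathbb{C}^{n\times n}$ is the matrix $(u_n(z),u_n'(z),\dots,u_n^{(n-1)}(z))$ with $u_n(z)=(1,z,\dots,z^{n-1})^\top$; $W_n(z)=U_n(z)^\top$ is the matrix whose $i$-th row is $w_n^{(i)}(z)$ with $w_n(z)=(1,z,\dots,z^{n-1})$; $\widetilde U_n(z)$ has entries $\binom{i}{j}z^{i-j}$ ($0$ for $j>i$), i.e. its $j$-th column is $u_n^{(j)}(z)/j!$; $\widetilde W_n(z)=\widetilde U_n(z)^\top$, i.e. its $i$-th row is $w_n^{(i)}(z)/i!$. *)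

(* Defs.v *)
From HB Require Import structures.
From mathcomp Require Import all_boot all_order all_algebra.
From mathcomp Require Import reals.
From mathcomp Require Export complex mxtens.
Set Implicit Arguments. Unset Strict Implicit. Unset Printing Implicit Defensive.
Import Order.TTheory GRing.Theory Num.Theory.
Local Open Scope ring_scope.

Section Defs.
Variable C : fieldType.

Definition mxderiv {m n} (P : 'M[{poly C}]_(m, n)) (k : nat) (z : C) : 'M[C]_(m, n) :=
  \matrix_(a, b) ((P a b)^`(k)).[z].

Definition upoly (n : nat) : 'cV[{poly C}]_n := \col_(a < n) 'X^a.
Definition wpoly (n : nat) : 'rV[{poly C}]_n := \row_(b < n) 'X^b.
Definition Mpoly (q r : nat) : 'M[{poly C}]_(q, r) := upoly q *m wpoly r.

Definition Mder (q r k : nat) (z : C) : 'M[C]_(q, r) := mxderiv (Mpoly q r) k z.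

(* block matrix of size (mu*q) x (nu*r) whose (i,j) block is B i j;
   the row index k corresponds to (k %/ q, k %% q) (Kronecker convention) *)
Definition blockmx (mu nu q r : nat) (B : nat -> nat -> 'M[C]_(q, r))
  : 'M[C]_(mu * q, nu * r) :=
  \matrix_(k, l) B (mxtens_unindex k).1 (mxtens_unindex l).1
                   (mxtens_unindex k).2 (mxtens_unindex l).2.

Definition calM (mu nu q r : nat) (z : C) : 'M[C]_(mu * q, nu * r) :=
  blockmx mu nu (fun i j => Mder q r (i + j) z).

Definition calN (mu nu q r : nat) (z : C) : 'M[C]_(mu * q, nu * r) :=
  blockmx mu nu (fun i j => ((i`!)%:R^-1 * (j`!)%:R^-1) *: Mder q r (i + j) z).

Definition Amx (q r k : nat) (z : C) : 'M[C]_(q, r) :=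
  \matrix_(a < q, b < r)
    (if (a + b <= k)%N then
       (k`!)%:R / (a`! * b`! * (k - a - b)`!)%:R * z ^+ (k - a - b)
     else 0).

Definition calA (mu nu q r : nat) (z : C) : 'M[C]_(mu * q, nu * r) :=
  blockmx mu nu (fun i j => Amx q r (i + j) z).

Definition Umx (n : nat) (z : C) : 'M[C]_n :=
  \matrix_(i < n, j < n) (('X^i : {poly C})^`(j)).[z].
Definition Wmx (n : nat) (z : C) : 'M[C]_n := (Umx n z)^T.

Definition tUmx (n : nat) (z : C) : 'M[C]_n :=
  \matrix_(i < n, j < n) (if (j <= i)%N then ('C(i, j))%:R * z ^+ (i - j) else 0).
Definition tWmx (n : nat) (z : C) : 'M[C]_n := (tUmx n z)^T.

End Defs.

(* Main.v *)
Require Import Defs.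
From HB Require Import structures.
From mathcomp Require Import all_boot all_order all_algebra.
From mathcomp Require Import reals complex mxtens.
From mathcomp Require Import ring.
Import Order.TTheory GRing.Theory Num.Theory.
Local Open Scope ring_scope.
Set Implicit Arguments. Unset Strict Implicit. Unset Printing Implicit Defensive.


Lemma sum_tens (V : nmodType) m n (F : 'I_(m * n) -> V) :
  \sum_(k < m * n) F k = \sum_(i < m) \sum_(j < n) F (mxtens_index (i, j)).
Proof.
rewrite pair_big /=.
rewrite (reindex (@mxtens_index m n)) /=; last first.
  by exists (@mxtens_unindex m n) => x _; rewrite (mxtens_indexK, mxtens_unindexK).
by apply: eq_bigr => -[i j].
Qed.

Lemma blockmxE (C : fieldType) mu nu q r (B : nat -> nat -> 'M[C]_(q, r)) i a j b :
  blockmx mu nu B (mxtens_index (i, a)) (mxtens_index (j, b)) = B i j a b.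
Proof. by rewrite mxE !mxtens_indexK. Qed.

Lemma mul3_tensE (C : comPzRingType) m m' p p' n n' s s'
  (P : 'M[C]_(m, m')) (Q : 'M[C]_(p, p')) (X : 'M[C]_(m' * p', n' * s'))
  (P' : 'M[C]_(n', n)) (Q' : 'M[C]_(s', s)) i a j b :
  ((tensmx P Q) *m X *m (tensmx P' Q')) (mxtens_index (i, a)) (mxtens_index (j, b))
  = \sum_(i' < m') \sum_(j' < n') (P i i' * P' j' j) *
      (Q *m (\matrix_(a', b') X (mxtens_index (i', a')) (mxtens_index (j', b'))) *m Q') a b.
Proof.
rewrite mxE sum_tens.
under eq_bigr => j' _ do (under eq_bigr => b' _ do
  rewrite mxE sum_tens tensmxE big_distrl /=).
under [RHS]eq_bigr => i' _ do (under eq_bigr => j' _ do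
  rewrite mxE big_distrr /=).
under eq_bigr => j' _ do rewrite exchange_big /=.
rewrite exchange_big /=.
apply: eq_bigr => i' _.
apply: eq_bigr => j' _.
apply: eq_bigr => b' _.
rewrite mxE big_distrl big_distrl big_distrr /=.
apply: eq_bigr => a' _.
rewrite tensmxE !mxE.
ring.
Qed.



Section Poly.
Variable C : numFieldType.

Lemma Mder_E q r k (z : C) (a : 'I_q) (b : 'I_r) :
  Mder q r k z a b = ('X^(a + b))^`(k).[z].
Proof.
by rewrite /Mder /mxderiv /Mpoly !mxE big_ord1 !mxE exprD.
Qed.

Lemma fact_neq0 n : (n`!)%:R != 0 :> C.
Proof. by rewrite pnatr_eq0 -lt0n fact_gt0. Qed.

Lemma Amx_E q r k (z : C) (a : 'I_q) (b : 'I_r) :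
  Amx q r k z a b = (('X^k)^`(a + b)).[z] / (a`! * b`!)%:R.
Proof.
rewrite /Amx mxE derivnXn hornerMn hornerXn.
case: leqP => hab.
  rewrite -(ffact_fact hab) subnDA !natrM.
  have h1 := fact_neq0 a; have h2 := fact_neq0 b; have h3 := fact_neq0 (k - a - b).
  rewrite -mulr_natr; field.
  by rewrite h1 h2 h3.
by rewrite ffact_small // mulr0n mul0r.
Qed.

Lemma tU_sum n (w : C) (a : 'I_n) :
  \sum_(a' < n) tUmx n w a a' *: 'X^a' = ('X + w%:P) ^+ a.
Proof.
rewrite addrC exprDn.
rewrite (big_ord_widen n (fun i => (w%:P) ^+ (a - i) * 'X^i *+ 'C(a, i))) //.
rewrite [RHS]big_mkcond /=. apply: eq_bigr => i _.
rewrite mxE ltnS; case: leqP => hi; last by rewrite scale0r.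
by rewrite -polyC_exp mul_polyC scalerMnl mulr_natl.
Qed.

Lemma comp_XaddC_derivn (p : {poly C}) w d :
  (p \Po ('X + w%:P))^`(d) = p^`(d) \Po ('X + w%:P).
Proof.
elim: d => [|d IH]; first by rewrite !derivn0.
by rewrite !derivnS IH deriv_comp derivD derivX derivC addr0 mulr1.
Qed.

Lemma shift_deriv (p : {poly C}) d z w :
  ((p \Po ('X + w%:P))^`(d)).[z] = (p^`(d)).[z + w].
Proof. by rewrite comp_XaddC_derivn horner_comp hornerD hornerX hornerC. Qed.

Lemma double_sum n1 n2 (w : C) (i : 'I_n1) (j : 'I_n2) d z :
  \sum_(i' < n1) \sum_(j' < n2)
     tUmx n1 w i i' * tUmx n2 w j j' * (('X^i' * 'X^j')^`(d)).[z]
  = (('X^(i + j))^`(d)).[z + w].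
Proof.
rewrite -shift_deriv comp_Xn_poly exprD -!tU_sum mulr_suml.
rewrite linear_sum horner_sum; apply: eq_bigr => i' _.
rewrite mulr_sumr linear_sum horner_sum; apply: eq_bigr => j' _.
by rewrite -scalerAl -scalerAr !linearZ /= !hornerZ mulrA.
Qed.

Lemma sum_coefX n (c : 'I_n -> C) (k : 'I_n) :
  (\sum_(l < n) c l *: 'X^l)`_k = c k.
Proof.
rewrite coef_sum (bigD1 k) //= coefZ coefXn eqxx mulr1 big1 ?addr0 //.
move=> l hl; rewrite coefZ coefXn; case: eqP => [/val_inj e|]; last by rewrite mulr0.
by rewrite e eqxx in hl.
Qed.

Lemma tU_mul n (z w : C) : tUmx n z *m tUmx n w = tUmx n (z + w).
Proof.
apply/matrixP => i k.
rewrite -[RHS](sum_coefX (fun l => tUmx n (z + w) i l)) tU_sum.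
rewrite -(sum_coefX (fun l => (tUmx n z *m tUmx n w) i l)).
apply: (congr1 (fun p : {poly C} => p`_k)).
under eq_bigr => l _ do rewrite mxE scaler_suml.
rewrite exchange_big /=.
under eq_bigr => j _ do (under eq_bigr => l _ do rewrite -scalerA).
under eq_bigr => j _ do rewrite -scaler_sumr tU_sum.
have e : (('X + z%:P)^+i) \Po ('X + w%:P) = ('X + (z + w)%:P)^+i.
  rewrite -(comp_Xn_poly ('X + z%:P)) -comp_polyA comp_Xn_poly.
  rewrite comp_polyD comp_polyX comp_polyC polyCD; congr (_ ^+ _); ring.
rewrite -e.
rewrite -tU_sum linear_sum /=.
by apply: eq_bigr => j _; rewrite linearZ /= comp_Xn_poly.
Qed.

Lemma tU0 n : tUmx n (0 : C) = 1%:M.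
Proof.
apply/matrixP => i j; rewrite !mxE.
case: leqP => h.
  case: (ltngtP j i) => h2.
  - by rewrite expr0n subn_eq0 leqNgt h2 /= mulr0 eq_sym -val_eqE /= (ltn_eqF h2).
  - by move: h; rewrite leqNgt h2.
  - by rewrite h2 subnn expr0 mulr1 binn; move/val_inj: h2 => ->; rewrite eqxx.
by rewrite -val_eqE /= (ltn_eqF h).
Qed.
End Poly.



Lemma mul3E (C : comPzRingType) m m' n' n (P : 'M[C]_(m, m')) (B : 'M[C]_(m', n'))
  (P' : 'M[C]_(n', n)) a b :
  (P *m B *m P') a b = \sum_(a' < m') \sum_(b' < n') P a a' * P' b' b * B a' b'.
Proof.
rewrite mxE; under eq_bigr => b' _ do rewrite mxE big_distrl /=.
rewrite exchange_big /=; apply: eq_bigr => a' _; apply: eq_bigr => b' _.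
ring.
Qed.

Lemma blkE (C : Type) m' p' n' s' (X : 'M[C]_(m' * p', n' * s')) i' j' a b :
  (\matrix_(a', b') X (mxtens_index (i', a')) (mxtens_index (j', b'))) a b
  = X (mxtens_index (i', a)) (mxtens_index (j', b)).
Proof. by rewrite mxE. Qed.

Lemma sum_diag2 (C : comPzRingType) m n (P : 'M[C]_m) (P' : 'M[C]_n)
  (G : 'I_m -> 'I_n -> C) i j :
  (forall k l, k != l -> P k l = 0) -> (forall k l, k != l -> P' k l = 0) ->
  \sum_(i' < m) \sum_(j' < n) P i i' * P' j' j * G i' j' = P i i * P' j j * G i j.
Proof.
move=> hP hP'.
rewrite (bigD1 i) //= [X in _ + X]big1 => [|i' hi']; last first.
  by apply: big1 => j' _; rewrite hP 1?eq_sym // !mul0r.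
rewrite addr0 (bigD1 j) //= [X in _ + X]big1 ?addr0 // => j' hj'.
by rewrite hP' // mulr0 mul0r.
Qed.

Lemma scalar_offdiag (C : pzRingType) n (c : C) (k l : 'I_n) : k != l -> (c%:M : 'M_n) k l = 0.
Proof. by move=> h; rewrite mxE (negbTE h) mulr0n. Qed.

Lemma diag_offdiag (C : pzRingType) n (d : 'rV[C]_n) (k l : 'I_n) : k != l -> diag_mx d k l = 0.
Proof. by move=> h; rewrite mxE (negbTE h) mulr0n. Qed.

Section Mat.
Variable C : numFieldType.

Lemma calAE mu nu q r (z : C) i a j b :
  calA mu nu q r z (mxtens_index (i, a)) (mxtens_index (j, b)) = Amx q r (i + j) z a b.
Proof. by rewrite /calA blockmxE. Qed.
Lemma calME mu nu q r (z : C) i a j b :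
  calM mu nu q r z (mxtens_index (i, a)) (mxtens_index (j, b)) = Mder q r (i + j) z a b.
Proof. by rewrite /calM blockmxE. Qed.
Lemma calNE mu nu q r (z : C) i a j b :
  calN mu nu q r z (mxtens_index (i, a)) (mxtens_index (j, b)) =
  (i`!)%:R^-1 * (j`!)%:R^-1 * Mder q r (i + j) z a b.
Proof. by rewrite /calN blockmxE mxE. Qed.

Definition Dm n : 'M[C]_n := diag_mx (\row_(i < n) ((i`!)%:R : C)).
Definition Dinv n : 'M[C]_n := diag_mx (\row_(i < n) ((i`!)%:R : C)^-1).

Lemma shiftA mu nu q r (z w : C) :
  calA mu nu q r (z + w) = (tensmx (tUmx mu w) (1%:M : 'M_q)) *m calA mu nu q r z
     *m (tensmx (tWmx nu w) (1%:M : 'M_r)).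
Proof.
apply/matrixP => k l; case: (mxtens_indexP k) => i a; case: (mxtens_indexP l) => j b.
rewrite mul3_tensE calAE Amx_E.
under eq_bigr => i' _ do (under eq_bigr => j' _ do
  rewrite mul1mx mulmx1 blkE calAE Amx_E [tWmx _ _ _ _]mxE exprD mulrA).
under eq_bigr => i' _ do rewrite -mulr_suml.
by rewrite -mulr_suml double_sum.
Qed.

Lemma shiftM0 mu nu q r (z : C) :
  calM mu nu q r z = (tensmx (1%:M : 'M_mu) (tUmx q z)) *m calM mu nu q r 0
     *m (tensmx (1%:M : 'M_nu) (tWmx r z)).
Proof.
apply/matrixP => k l; case: (mxtens_indexP k) => i a; case: (mxtens_indexP l) => j b.
rewrite mul3_tensE calME Mder_E.
rewrite (sum_diag2 (fun i' j' => (tUmx q z *m _ *m tWmx r z) a b)); last first.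
- exact: scalar_offdiag.
- exact: scalar_offdiag.
rewrite [1%:M i i]mxE [1%:M j j]mxE !eqxx !mulr1n !mul1r mul3E.
under eq_bigr => a' _ do (under eq_bigr => b' _ do
  rewrite blkE calME Mder_E [tWmx _ _ _ _]mxE exprD).
by rewrite double_sum add0r.
Qed.

Lemma N_of_M mu nu q r (z : C) :
  calN mu nu q r z = (tensmx (Dinv mu) (1%:M : 'M_q)) *m calM mu nu q r z
     *m (tensmx (Dinv nu) (1%:M : 'M_r)).
Proof.
apply/matrixP => k l; case: (mxtens_indexP k) => i a; case: (mxtens_indexP l) => j b.
rewrite mul3_tensE calNE.
rewrite (sum_diag2 (fun i' j' => (1%:M *m _ *m 1%:M) a b)); last first.
- exact: diag_offdiag.
- exact: diag_offdiag.
by rewrite mul1mx mulmx1 blkE calME !mxE !eqxx !mulr1n.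
Qed.

Lemma U_tUD n (z : C) : Umx n z = tUmx n z *m Dm n.
Proof.
apply/matrixP => i j; rewrite mul_mx_diag !mxE derivnXn hornerMn hornerXn.
case: leqP => h.
  by rewrite -mulr_natr -bin_ffact natrM; ring.
by rewrite ffact_small // mulr0n mul0r.
Qed.

Lemma Xderiv0_sym m n : (('X^m)^`(n)).[0] = (('X^n)^`(m)).[0] :> C.
Proof.
rewrite !derivnXn !hornerMn !hornerXn.
case: (ltngtP m n) => h.
- by rewrite (ffact_small h) mulr0n expr0n subn_eq0 leqNgt h mul0rn.
- by rewrite (ffact_small h) mulr0n expr0n subn_eq0 leqNgt h mul0rn.
- by rewrite h.
Qed.

Lemma A0_M0 mu nu q r :
  (tensmx (1%:M : 'M_mu) (Dm q)) *m calA mu nu q r (0 : C) *m (tensmx (1%:M : 'M_nu) (Dm r))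
  = calM mu nu q r 0.
Proof.
apply/matrixP => k l; case: (mxtens_indexP k) => i a; case: (mxtens_indexP l) => j b.
rewrite mul3_tensE calME.
rewrite (sum_diag2 (fun i' j' => (Dm q *m _ *m Dm r) a b)); last first.
- exact: scalar_offdiag.
- exact: scalar_offdiag.
rewrite [1%:M i i]mxE [1%:M j j]mxE !eqxx !mulr1n !mul1r.
rewrite Mder_E -Xderiv0_sym.
have := @calAE mu nu q r 0 i a j b; rewrite Amx_E.
move: (calA mu nu q r 0) => A hA.
rewrite mul_mx_diag mul_diag_mx !mxE hA.
have h1 := fact_neq0 C a; have h2 := fact_neq0 C b.
rewrite natrM; field.
by rewrite h1 h2.
Qed.

Lemma DDinv n : Dm n *m Dinv n = 1%:M.
Proof.
apply/matrixP => i j; rewrite mul_diag_mx !mxE.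
case: eqP => [->|_]; last by rewrite !mulr0n mulr0.
by rewrite !mulr1n mulfV // fact_neq0.
Qed.

Lemma invU n (z : C) : invmx (Umx n z) = Dinv n *m tUmx n (- z).
Proof.
have H : Umx n z *m (Dinv n *m tUmx n (- z)) = 1%:M.
  by rewrite U_tUD -mulmxA (mulmxA (Dm n)) DDinv mul1mx tU_mul subrr tU0.
have [uU _] := mulmx1_unit H.
by rewrite -[invmx _]mulmx1 -H mulmxA mulVmx // mul1mx.
Qed.

Lemma invW n (z : C) : invmx (Wmx n z) = tWmx n (- z) *m Dinv n.
Proof.
by rewrite /Wmx -trmx_inv invU trmx_mul /Dinv tr_diag_mx.
Qed.

Lemma W_DtW n (z : C) : Wmx n z = Dm n *m tWmx n z.
Proof. by rewrite /Wmx U_tUD trmx_mul /Dm tr_diag_mx. Qed.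
End Mat.



Section Main.
Variable C : numFieldType.

Lemma id3 mu nu q r (z : C) :
  calM mu nu q r z
        = (tensmx (tUmx mu (- z)) (Umx q z)) *m calA mu nu q r z
            *m (tensmx (tWmx nu (- z)) (Wmx r z)).
Proof.
have e1 : tensmx (tUmx mu (-z)) (Umx q z)
   = tensmx (1%:M : 'M_mu) (Umx q z) *m tensmx (tUmx mu (-z)) (1%:M : 'M_q).
  by rewrite tensmx_mul mul1mx mulmx1.
have e2 : tensmx (tWmx nu (-z)) (Wmx r z)
   = tensmx (tWmx nu (-z)) (1%:M : 'M_r) *m tensmx (1%:M : 'M_nu) (Wmx r z).
  by rewrite tensmx_mul mul1mx mulmx1.
have e3 := shiftA mu nu q r z (- z); rewrite subrr in e3.
rewrite e1 e2.
transitivity (tensmx (1%:M : 'M_mu) (Umx q z) *m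
   (tensmx (tUmx mu (-z)) (1%:M : 'M_q) *m calA mu nu q r z *m tensmx (tWmx nu (-z)) (1%:M : 'M_r))
   *m tensmx (1%:M : 'M_nu) (Wmx r z)); last by rewrite !mulmxA.
rewrite -e3 U_tUD W_DtW.
have e4 : tensmx (1%:M : 'M_mu) (tUmx q z *m Dm C q)
   = tensmx (1%:M : 'M_mu) (tUmx q z) *m tensmx (1%:M : 'M_mu) (Dm C q).
  by rewrite tensmx_mul mul1mx.
have e5 : tensmx (1%:M : 'M_nu) (Dm C r *m tWmx r z)
   = tensmx (1%:M : 'M_nu) (Dm C r) *m tensmx (1%:M : 'M_nu) (tWmx r z).
  by rewrite tensmx_mul mul1mx.
rewrite e4 e5 shiftM0 -A0_M0.
by rewrite !mulmxA.
Qed.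

Lemma id4 mu nu q r (z : C) :
  calN mu nu q r z
        = (tensmx (invmx (Umx mu z)) (Umx q z)) *m calA mu nu q r z
            *m (tensmx (invmx (Wmx nu z)) (Wmx r z)).
Proof.
rewrite invU invW.
have e1 : tensmx (Dinv C mu *m tUmx mu (-z)) (Umx q z)
   = tensmx (Dinv C mu) (1%:M : 'M_q) *m tensmx (tUmx mu (-z)) (Umx q z).
  by rewrite tensmx_mul mul1mx.
have e2 : tensmx (tWmx nu (-z) *m Dinv C nu) (Wmx r z)
   = tensmx (tWmx nu (-z)) (Wmx r z) *m tensmx (Dinv C nu) (1%:M : 'M_r).
  by rewrite tensmx_mul mulmx1.
rewrite e1 e2 N_of_M id3.
by rewrite !mulmxA.
Qed.

Lemma id5 mu nu q r (z : C) :
  calN mu nu q r z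
        = (tensmx (1%:M : 'M_mu) (tUmx q z)) *m calN mu nu q r 0
            *m (tensmx (1%:M : 'M_nu) (tWmx r z)).
Proof.
rewrite !N_of_M shiftM0.
have e1 : tensmx (Dinv C mu) (1%:M : 'M_q) *m tensmx (1%:M : 'M_mu) (tUmx q z)
   = tensmx (1%:M : 'M_mu) (tUmx q z) *m tensmx (Dinv C mu) (1%:M : 'M_q).
  by rewrite !tensmx_mul mul1mx mulmx1 mulmx1 mul1mx.
have e2 : tensmx (1%:M : 'M_nu) (tWmx r z) *m tensmx (Dinv C nu) (1%:M : 'M_r)
   = tensmx (Dinv C nu) (1%:M : 'M_r) *m tensmx (1%:M : 'M_nu) (tWmx r z).
  by rewrite !tensmx_mul mul1mx mulmx1 mulmx1 mul1mx.
rewrite !mulmxA e1 -!mulmxA e2.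
by rewrite !mulmxA.
Qed.
End Main.


Unset Implicit Arguments.
Local Open Scope complex_scope.

Theorem proposition3p5 (R : realType) (q r mu nu : nat)
  (hq : (0 < q)%N) (hr : (0 < r)%N) (hmu : (0 < mu)%N) (hnu : (0 < nu)%N)
  (z : R[i]) :
  [/\ calA mu nu q r z
        = (tensmx (tUmx mu z) (1%:M : 'M_q)) *m calA mu nu q r 0
            *m (tensmx (tWmx nu z) (1%:M : 'M_r)),
      calM mu nu q r z
        = (tensmx (1%:M : 'M_mu) (tUmx q z)) *m calM mu nu q r 0
            *m (tensmx (1%:M : 'M_nu) (tWmx r z)),
      calM mu nu q r z
        = (tensmx (tUmx mu (- z)) (Umx q z)) *m calA mu nu q r z
            *m (tensmx (tWmx nu (- z)) (Wmx r z)),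
      calN mu nu q r z
        = (tensmx (invmx (Umx mu z)) (Umx q z)) *m calA mu nu q r z
            *m (tensmx (invmx (Wmx nu z)) (Wmx r z))
    & calN mu nu q r z
        = (tensmx (1%:M : 'M_mu) (tUmx q z)) *m calN mu nu q r 0
            *m (tensmx (1%:M : 'M_nu) (tWmx r z))].
Proof.
split; [ | exact: shiftM0 | exact: id3 | exact: id4 | exact: id5].
by have := shiftA mu nu q r 0 z; rewrite add0r.
Qed.
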